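(* Let $K$ be a field of characteristic $p>0$ with $[K:K^p]=p^r$ for some integer $r\ge 1$, and let $\nu(r)_K$ be the group defined below. Then $\nu(r)_K$ is unirational.
   Context: Let $t_1,\dots,t_r$ be a $p$-basis of $K$. $\nu(r)_K$ is the closed subgroup of $\mathbf{G}_a^{p^r}$, with coordinates $x_{i(1)\cdots i(r)}$ indexed by $0\le i(1),\dots,i(r)\le p-1$, defined by $x_{0\cdots 0}-\sum_{0\le i(1),\dots,i(r)\le p-1}x_{i(1)\cdots i(r)}^p t_1^{i(1)}\cdots t_r^{i(r)}=0$; equivalently it is the kernel of $C-W^*:\operatorname{Res}_{K^{1/p}/K}\Omega^r_{K^{1/p}}\to\Omega^r_K$ (Cartier operator minus formal $p$-th power). A variety over $K$ is unirational if there is a dominant rational map to it from some affine space $\mathbb{A}^n_K$. *)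

(* Defs.v *)
From HB Require Import structures.
From mathcomp Require Import all_boot all_order all_algebra.
From mathcomp Require Import fraction.
From mathcomp.multinomials Require Import mpoly.
Set Implicit Arguments. Unset Strict Implicit. Unset Printing Implicit Defensive.
Import GRing.Theory.
Local Open Scope ring_scope.

Definition nu_idx (p r : nat) := {ffun 'I_r -> 'I_p}.

Definition nu_dim (p r : nat) : nat := #|{: nu_idx p r}|.

Definition tmon (K : fieldType) (p r : nat) (t : 'I_r -> K) (i : nu_idx p r) : K :=
  \prod_(j < r) t j ^+ (i j).

(* t_1..t_r is a p-basis of K: the monomials t^i (0 <= i(j) <= p-1) form a
   basis of K over K^p, i.e. every x in K is uniquely sum_i c_i^p t^i. *)
Definition is_p_basis (K : fieldType) (p r : nat) (t : 'I_r -> K) : Prop :=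
  forall x : K, exists! c : {ffun nu_idx p r -> K},
    x = \sum_(i : nu_idx p r) c i ^+ p * tmon t i.

Definition nu_var (K : fieldType) (p r : nat) (i : nu_idx p r) : {mpoly K[nu_dim p r]} :=
  'X_(enum_rank i).

Definition is_zero_idx (p r : nat) (i : nu_idx p r) : bool :=
  [forall j, (i j == 0 :> nat)].

(* The defining equation x_{0..0} - sum_i x_i^p t^i of nu(r)_K.
   (x_{0..0} is written as the sum over the unique index (0,..,0), p > 0.) *)
Definition nu_eq (K : fieldType) (p r : nat) (t : 'I_r -> K) : {mpoly K[nu_dim p r]} :=
  \sum_(i : nu_idx p r | is_zero_idx i) nu_var K i - \sum_(i : nu_idx p r) (nu_var K i) ^+ p * (tmon t i)%:MP.

Definition eval_rat (K : fieldType) (N n : nat) (g : {mpoly K[N]})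
    (phi : 'I_N -> {fraction {mpoly K[n]}}) : {fraction {mpoly K[n]}} :=
  mmap (fun c : K => @FracField.tofrac {mpoly K[n]} c%:MP) phi g.

(* The closed subscheme V(f) of A^N_K is unirational: there is a rational map
   phi : A^n_K -|-> A^N_K (components in K(y_1..y_n)) landing in V(f)
   (f(phi) = 0) and dominant onto V(f): the kernel of the comorphism
   K[x] -> K(y) is contained in the radical of (f), i.e. the closure of the
   image is all of V(f). *)
Definition unirational_hypersurface (K : fieldType) (N : nat) (f : {mpoly K[N]}) : Prop :=
  exists (n : nat) (phi : 'I_N -> {fraction {mpoly K[n]}}),
    eval_rat f phi = 0 /\
    forall g : {mpoly K[N]}, eval_rat g phi = 0 ->
      exists (m : nat) (q : {mpoly K[N]}), g ^+ m = q * f.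

(* Main.v *)
Require Import Defs.
From HB Require Import structures.
From mathcomp Require Import all_boot all_order all_algebra.
From mathcomp Require Import fraction.
From mathcomp.multinomials Require Import mpoly.
From mathcomp Require Import ring zify.
Set Implicit Arguments. Unset Strict Implicit. Unset Printing Implicit Defensive.
Import GRing.Theory.
Local Open Scope ring_scope.

Section Main.
Variables (K : fieldType) (p r : nat) (t : 'I_r -> K).
Hypotheses (pP : prime p) (chK : p \in [pchar K]) (r0 : (0 < r)%N).

Local Notation I := (nu_idx p r).
Local Notation N := (nu_dim p r).
Local Notation P := {mpoly K[N.+1]}.
Local Notation F := {fraction P}.

Lemma p_gt0 : (0 < p)%N. Proof. exact: prime_gt0. Qed.
Lemma p_gt1 : (1 < p)%N. Proof. exact: prime_gt1. Qed.

Definition z0 : I := [ffun _ => Ordinal p_gt0].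

Lemma is_zero_idxE (i : I) : is_zero_idx i = (i == z0).
Proof.
apply/forallP/eqP => [H|->] /=; last by move=> k; rewrite ffunE.
by apply/ffunP => k; rewrite ffunE; apply/val_inj => /=; apply/eqP/H.
Qed.

Definition kmul (k : nat) (i : I) : I :=
  [ffun l => Ordinal (ltn_pmod (k * i l) p_gt0)].

Lemma kmul0 i : kmul 0 i = z0.
Proof. by apply/ffunP => l; rewrite !ffunE; apply/val_inj; rewrite /= mul0n mod0n. Qed.

Lemma kmul1 i : kmul 1 i = i.
Proof. by apply/ffunP => l; rewrite !ffunE; apply/val_inj; rewrite /= mul1n modn_small. Qed.

Lemma kmul_nz k i : i != z0 -> (0 < k < p)%N -> kmul k i != z0.
Proof.
move=> iz /andP[k0 kp]; apply/eqP => /ffunP E.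
case/eqP: iz; apply/ffunP => l; move: (E l); rewrite !ffunE => /(congr1 val) /= /eqP H.
apply/val_inj => /=.
have : (p %| k * i l)%N by [].
rewrite Euclid_dvdM // => /orP[|].
  by move=> /dvdn_leq => /(_ k0); rewrite leqNgt kp.
have il := ltn_ord (i l).
case: (posnP (i l)) => // il0 /dvdn_leq => /(_ il0); by rewrite leqNgt il.
Qed.

Definition tau (k : nat) (i : I) : K := \prod_(l < r) t l ^+ ((k * i l) %/ p).

Lemma tau_tmon k i : tau k i ^+ p * tmon t (kmul k i) = tmon t i ^+ k.
Proof.
rewrite /tmon /tau -!prodrXl -big_split /=; apply: eq_bigr => l _.
rewrite /kmul ffunE /= -!exprM -exprD; congr (_ ^+ _).
by rewrite [in RHS]mulnC -divn_eq.
Qed.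

Lemma tau0 i : tau 0 i = 1.
Proof. by rewrite /tau big1 // => l _; rewrite mul0n div0n expr0. Qed.

Lemma tau1 i : tau 1 i = 1.
Proof. by rewrite /tau big1 // => l _; rewrite mul1n divn_small ?expr0. Qed.

Definition jj : I :=
  [ffun l : 'I_r => if val l == 0%N then Ordinal p_gt1 else Ordinal p_gt0].

Lemma jj_nz : jj != z0.
Proof.
apply/eqP => /ffunP /(_ (Ordinal r0)); rewrite !ffunE /= => /(congr1 val).
by [].
Qed.

Definition w (i : I) : nat := if i == jj then 2%N else 3%N.
Definition epsi : 'I_N.+1 := ord_max.
Definition yi (i : I) : 'I_N.+1 := widen_ord (leqnSn _) (enum_rank i).
Definition eps : P := 'X_epsi.
Definition Yv (i : I) : P := 'X_(yi i).
Definition zp (i : I) : P := eps ^+ w i * Yv i.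
Definition Dp (i : I) : P := 1 + (tmon t i)%:MP * zp i ^+ p.

Definition cf : {rmorphism K -> F} := (@FracField.tofrac _) \o (@mpolyC _ K).
Definition kc (c : K) : F := tofrac (c%:MP).
Definition z (i : I) : F := tofrac (zp i).
Definition D (i : I) : F := tofrac (Dp i).

Definition u (i m : I) : F :=
  (\sum_(k < p | kmul k i == m) kc ('C(p.-1, k)%:R * tau k i) * z i ^+ k) / D i
   - (m == z0)%:R.
Definition Phi (m : I) : F := \sum_(i | i != z0) u i m.
Definition phi : 'I_N -> F := fun k => Phi (enum_val k).

Definition ev0 : {rmorphism P -> P} :=
  mmap (@mpolyC _ K) (fun k : 'I_N.+1 => if k == epsi then 0 else 'X_k).
Lemma ev0E x : ev0 x = mmap (@mpolyC _ K) (fun k : 'I_N.+1 => if k == epsi then 0 else 'X_k) x.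
Proof. by []. Qed.

Lemma yi_neq i : (yi i == epsi) = false.
Proof. by apply/negbTE; rewrite -val_eqE /= neq_ltn ltn_ord. Qed.

Lemma ev0_eps : ev0 eps = 0.
Proof. by rewrite ev0E /eps mmapX mmap1U eqxx. Qed.

Lemma ev0_Y i : ev0 (Yv i) = Yv i.
Proof. by rewrite ev0E /Yv mmapX mmap1U yi_neq. Qed.

Lemma ev0_C c : ev0 c%:MP = c%:MP.
Proof. by rewrite ev0E mmapC. Qed.

Lemma ev0_zp i : ev0 (zp i) = 0.
Proof. rewrite /zp rmorphM rmorphXn ev0_eps expr0n /w. by case: ifP => _; rewrite mul0r. Qed.

Lemma ev0_Dp i : ev0 (Dp i) = 1.
Proof.
rewrite /Dp rmorphD rmorph1 rmorphM rmorphXn ev0_zp expr0n.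
by rewrite gtn_eqF ?p_gt0 // mulr0 addr0.
Qed.

Lemma Dp_neq0 i : Dp i != 0.
Proof. by apply/eqP => E; move: (ev0_Dp i); rewrite E rmorph0 => /eqP; rewrite eq_sym oner_eq0. Qed.

Lemma D_neq0 i : D i != 0.
Proof. by rewrite /D tofrac_eq0 Dp_neq0. Qed.

Lemma eps_neq0 : eps != 0.
Proof.
apply/eqP => /(congr1 (mcoeff U_(epsi))); rewrite /eps mcoeffX eqxx mcoeff0.
by move/eqP; rewrite oner_eq0.
Qed.

Definition Good (k : nat) (x : F) (l : P) :=
  exists a b : P, [/\ ev0 b = 1, ev0 a = l & x = tofrac (eps ^+ k * a) / tofrac b].

Lemma b_neq0 b : ev0 b = 1 -> tofrac b != 0 :> F.
Proof. by move=> E; rewrite tofrac_eq0; apply/eqP => b0; move: E; rewrite b0 rmorph0 => /eqP; rewrite eq_sym oner_eq0. Qed.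

Lemma Good_eq k x l l' : l = l' -> Good k x l -> Good k x l'.
Proof. by move=> ->. Qed.

Lemma Good0 k : Good k 0 0.
Proof. exists 0, 1; split; rewrite ?ev0_C ?rmorph0 ?rmorph1 //. by rewrite mulr0 tofrac0 mul0r. Qed.

Lemma fadd (L : fieldType) (e A A' B B' : L) k : B != 0 -> B' != 0 ->
  e ^+ k * A / B + e ^+ k * A' / B' = e ^+ k * (A * B' + A' * B) / (B * B').
Proof. by move=> h1 h2; field; rewrite h1 h2. Qed.

Lemma fmul (L : fieldType) (e A A' B B' : L) k k' : B != 0 -> B' != 0 ->
  e ^+ k * A / B * (e ^+ k' * A' / B') = e ^+ (k + k') * (A * A') / (B * B').
Proof. by move=> h1 h2; rewrite exprD; field; rewrite h1 h2. Qed.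

Lemma Good_add k x y l l' : Good k x l -> Good k y l' -> Good k (x + y) (l + l').
Proof.
move=> [a [b [b1 a1 ->]]] [a' [b' [b1' a1' ->]]].
exists (a * b' + a' * b), (b * b'); split.
- by rewrite rmorphM b1 b1' mulr1.
- by rewrite rmorphD !rmorphM b1 b1' a1 a1' !mulr1.
have := b_neq0 b1; have := b_neq0 b1'.
move=> h1 h2; rewrite !tofracM !tofracD !tofracM !tofracXn fadd; [done|exact h2|exact h1].
Qed.

Lemma Good_mul k k' x y l l' : Good k x l -> Good k' y l' -> Good (k + k')%N (x * y) (l * l').
Proof.
move=> [a [b [b1 a1 ->]]] [a' [b' [b1' a1' ->]]].
exists (a * a'), (b * b'); split.
- by rewrite rmorphM b1 b1' mulr1.
- by rewrite rmorphM a1 a1'.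
have := b_neq0 b1; have := b_neq0 b1'.
move=> h1 h2; rewrite !tofracM !tofracXn fmul; [done|exact h2|exact h1].
Qed.

Lemma Good_lower k k' x l : (k < k')%N -> Good k' x l -> Good k x 0.
Proof.
move=> kk [a [b [b1 a1 ->]]]; exists (eps ^+ (k' - k) * a), b; split => //.
  by rewrite rmorphM rmorphXn ev0_eps expr0n subn_eq0 leqNgt kk mul0r.
by rewrite mulrA -exprD subnKC // ltnW.
Qed.

Lemma Good_C c : Good 0 (kc c) c%:MP.
Proof. exists c%:MP, 1; split; rewrite ?ev0_C ?rmorph1 //. by rewrite expr0 mul1r divr1. Qed.

Lemma Good_1 : Good 0 1 1.
Proof. by apply: (Good_eq (mpolyC1 _ _)); have := Good_C 1; rewrite /kc mpolyC1 tofrac1. Qed.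

Lemma Good_sum (T : Type) (s : seq T) (Q : pred T) k (X : T -> F) (L : T -> P) :
  (forall i, Q i -> Good k (X i) (L i)) ->
  Good k (\sum_(i <- s | Q i) X i) (\sum_(i <- s | Q i) L i).
Proof.
move=> H; elim: s => [|a s IH]; first by rewrite !big_nil; exact: Good0.
rewrite !big_cons; case: ifP => // Qa; exact: Good_add (H _ Qa) IH.
Qed.

Lemma Good_prod (T : Type) (s : seq T) (W : T -> nat) (X : T -> F) (L : T -> P) :
  (forall i, Good (W i) (X i) (L i)) ->
  Good (\sum_(i <- s) W i)%N (\prod_(i <- s) X i) (\prod_(i <- s) L i).
Proof.
move=> H; elim: s => [|a s IH]; first by rewrite !big_nil; exact: Good_1.
rewrite !big_cons; exact: Good_mul (H a) IH.
Qed.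

Lemma Good_exp k x l e : Good k x l -> Good (k * e)%N (x ^+ e) (l ^+ e).
Proof.
move=> H; elim: e => [|e IH]; first by rewrite muln0 !expr0; exact: Good_1.
by rewrite !exprS mulnS; exact: Good_mul H IH.
Qed.

Lemma Good_z i : Good (w i) (z i) (Yv i).
Proof.
exists (Yv i), 1; split; rewrite ?ev0_Y ?rmorph1 //.
by rewrite ?tofrac1 divr1.
Qed.

Lemma Good_invD i : Good 0 (D i)^-1 1.
Proof. exists 1, (Dp i); split; rewrite ?ev0_Dp ?rmorph1 //. by rewrite expr0 mulr1 ?tofrac1 div1r. Qed.

Lemma Good_zero k l : Good k 0 l -> l = 0.
Proof.
move=> [a [b [b1 <- E]]].
have := b_neq0 b1 => bn.
move/eqP: E; rewrite eq_sym mulf_eq0 invr_eq0 (negbTE bn) orbF tofrac_eq0 mulf_eq0.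
rewrite expf_eq0 (negbTE eps_neq0) andbF /= => /eqP ->.
by rewrite rmorph0.
Qed.


Definition cP : K := (p.-1)%:R.

Lemma kmul_eq0 (i : I) (k : 'I_p) : i != z0 -> (kmul k i == z0) = (val k == 0%N).
Proof.
move=> iz; case: (posnP k) => [->|k0]; first by rewrite kmul0 !eqxx.
by rewrite (negbTE (kmul_nz iz _)) ?k0 ?ltn_ord // gtn_eqF.
Qed.

Lemma S0 (i : I) (G : 'I_p -> F) : i != z0 ->
  \sum_(k < p | kmul k i == z0) G k = G (Ordinal p_gt0).
Proof.
move=> iz; rewrite (big_pred1 (Ordinal p_gt0)) // => k /=.
by rewrite kmul_eq0 // -val_eqE.
Qed.

Lemma Good_u_nz i m : i != z0 -> m != z0 ->
  Good (w m) (u i m) (if i == m then cP%:MP * Yv m else 0).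
Proof.
move=> iz mz; rewrite /u (negbTE mz) subr0 mulr_suml.
apply: (@Good_eq _ _ (\sum_(k < p | kmul k i == m)
   (if val k == 1%N then cP%:MP * Yv m else 0))).
  case: eqP => [<-|im].
    rewrite (bigD1 (Ordinal p_gt1)) /= ?kmul1 // big1 ?addr0 // => k /andP[_].
    by rewrite -val_eqE /= => /negbTE ->.
  apply: big1 => k /eqP km; case: eqP => // k1; case: im.
  by rewrite -km k1 kmul1.
apply: Good_sum => k /eqP km.
have G := Good_mul (Good_mul (Good_C ('C(p.-1, k)%:R * tau k i)) (Good_exp k (Good_z i))) (Good_invD i).
case: eqP => k1.
  have ki : i = m by rewrite -km k1 kmul1.
  have -> : w m = (0 + w i * k + 0)%N by rewrite add0n addn0 k1 muln1 ki.
  apply: Good_eq G.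
  by rewrite mulr1 k1 bin1 tau1 mulr1 expr1 ki.
apply: Good_lower G; rewrite add0n addn0 /w.
have k2 : (2 <= k)%N.
  have k0 : nat_of_ord k != 0%N.
    apply/eqP => k0; move: mz; rewrite -km k0 kmul0 eqxx //.
  have k1' : nat_of_ord k != 1%N by apply/eqP.
  by move: k0 k1'; case: (nat_of_ord k) => [|[|k']].
case: ifP => _; case: ifP => _; lia.
Qed.


Lemma fu0 (L : fieldType) (a : L) : 1 + a != 0 -> 1 / (1 + a) - 1 = - a / (1 + a).
Proof. by move=> h; field. Qed.

Lemma u0E i : i != z0 -> u i z0 = - (kc (tmon t i) * z i ^+ p) / D i.
Proof.
move=> iz; rewrite /u S0 // eqxx /= bin0 tau0 mulr1 expr0 mulr1 /kc mpolyC1 tofrac1.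
have : D i = 1 + kc (tmon t i) * z i ^+ p by rewrite /D /Dp tofracD tofrac1 tofracM tofracXn.
have := D_neq0 i; move: (D i) => d dn E; rewrite E in dn *.
rewrite fu0; [done | exact dn].
Qed.

Lemma Good_u0 i : i != z0 -> Good (w i * p)%N (u i z0) (- (tmon t i)%:MP * Yv i ^+ p).
Proof.
move=> iz; rewrite u0E //.
have -> : - (kc (tmon t i) * z i ^+ p) / D i = kc (- tmon t i) * z i ^+ p * (D i)^-1.
  by rewrite /kc mpolyCN tofracN !mulNr.
have G := Good_mul (Good_mul (Good_C (- tmon t i)) (Good_exp p (Good_z i))) (Good_invD i).
rewrite (_ : (w i * p = 0 + w i * p + 0)%N); last by rewrite add0n addn0.
apply: Good_eq G.
by rewrite mulr1 mpolyCN.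
Qed.

Definition Wt (m : I) : nat := if m == z0 then (2 * p)%N else w m.
Definition Lam (m : I) : P :=
  if m == z0 then - (tmon t jj)%:MP * Yv jj ^+ p else cP%:MP * Yv m.

Lemma Good_Phi m : Good (Wt m) (Phi m) (Lam m).
Proof.
rewrite /Phi /Wt /Lam; case: eqP => [->|/eqP mz].
  apply: (@Good_eq _ _ (\sum_(i | i != z0) if i == jj then - (tmon t jj)%:MP * Yv jj ^+ p else 0)).
    rewrite (bigD1 jj) ?jj_nz //= eqxx big1 ?addr0 // => i /andP[_ /negbTE ->] //.
  apply: Good_sum => i iz; have G := Good_u0 iz.
  case: eqP => [ij|/eqP ij].
    by move: G; rewrite ij /w eqxx.
  apply: Good_lower G; rewrite /w (negbTE ij); have := p_gt0; lia.
apply: (@Good_eq _ _ (\sum_(i | i != z0) if i == m then cP%:MP * Yv m else 0)).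
  by rewrite (bigD1 m) //= eqxx big1 ?addr0 // => i /andP[_ /negbTE ->].
by apply: Good_sum => i iz; apply: Good_u_nz.
Qed.


Lemma chF : p \in [pchar F]. Proof. exact: (rmorph_pchar cf chK). Qed.

Lemma frobS (T : Type) (s : seq T) (Q : pred T) (G : T -> F) :
  (\sum_(i <- s | Q i) G i) ^+ p = \sum_(i <- s | Q i) G i ^+ p.
Proof.
rewrite -(pFrobenius_autE chF) rmorph_sum; apply: eq_bigr => i _.
exact: (pFrobenius_autE chF).
Qed.

Lemma frobB (x y : F) : (x - y) ^+ p = x ^+ p - y ^+ p.
Proof. by rewrite -!(pFrobenius_autE chF) rmorphB. Qed.

Lemma frob_nat (n : nat) : (n%:R : F) ^+ p = n%:R.
Proof. by rewrite -(pFrobenius_autE chF) pFrobenius_aut_nat. Qed.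

Lemma frob_natK (n : nat) : (n%:R : K) ^+ p = n%:R.
Proof. by rewrite -(pFrobenius_autE chK) pFrobenius_aut_nat. Qed.

Lemma kcM a b : kc (a * b) = kc a * kc b.
Proof. by rewrite /kc mpolyCM tofracM. Qed.
Lemma kcX a k : kc (a ^+ k) = kc a ^+ k.
Proof. by rewrite /kc rmorphXn tofracXn. Qed.
Lemma kc1 : kc 1 = 1.
Proof. by rewrite /kc mpolyC1 tofrac1. Qed.
Lemma kc_nat k : kc k%:R = k%:R.
Proof. by rewrite /kc mpolyC_nat tofracMn tofrac1. Qed.

Lemma tmon_z0 : tmon t z0 = 1.
Proof. by rewrite /tmon big1 // => l _; rewrite ffunE expr0. Qed.

Lemma binsum (x : F) :
  \sum_(k < p) 'C(p.-1, k)%:R * x ^+ k = (x + 1) ^+ p.-1.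
Proof.
rewrite exprD1n -(big_mkord xpredT (fun k => 'C(p.-1, k)%:R * x ^+ k)).
rewrite -(big_mkord xpredT (fun k => x ^+ k *+ 'C(p.-1, k))).
rewrite (prednK p_gt0); apply: eq_bigr => k _; by rewrite mulr_natl.
Qed.

Lemma fdiv (L : fieldType) (d : L) (k : nat) : d != 0 -> d ^+ k / d ^+ k.+1 = 1 / d.
Proof.
move=> dn; rewrite exprS invfM mulrCA divff ?mulr1 ?div1r //.
exact: expf_neq0.
Qed.

Lemma uz0 i : i != z0 -> u i z0 = 1 / D i - 1.
Proof.
by move=> iz; rewrite /u S0 // eqxx /= bin0 tau0 mulr1 expr0 mulr1 kc1.
Qed.

Lemma curve i : i != z0 -> \sum_m u i m ^+ p * kc (tmon t m) = u i z0.
Proof.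
move=> iz.
pose S m := \sum_(k < p | kmul k i == m) kc ('C(p.-1, k)%:R * tau k i) * z i ^+ k.
have uE m : u i m ^+ p = S m ^+ p / D i ^+ p - (m == z0)%:R.
  by rewrite /u frobB exprMn exprVn frob_nat.
rewrite (eq_bigr (fun m => S m ^+ p * kc (tmon t m) / D i ^+ p -
    (m == z0)%:R * kc (tmon t m))); last first.
  by move=> m _; rewrite uE mulrBl mulrAC.
rewrite sumrB.
have -> : \sum_m (m == z0)%:R * kc (tmon t m) = 1.
  rewrite (bigD1 z0) //= eqxx mul1r tmon_z0 kc1 big1 ?addr0 // => m /negbTE ->.
  by rewrite mul0r.
rewrite -mulr_suml.
have -> : \sum_m S m ^+ p * kc (tmon t m) = (D i) ^+ p.-1.
  rewrite (eq_bigr (fun m => \sum_(k < p) if kmul k i == m then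
      (kc ('C(p.-1, k)%:R * tau k i) * z i ^+ k) ^+ p * kc (tmon t m) else 0)); last first.
    move=> m _; rewrite /S frobS mulr_suml big_mkcond /=.
    by apply: eq_bigr => k _; case: ifP => //; rewrite mul0r.
  rewrite exchange_big /=.
  rewrite (eq_bigr (fun k : 'I_p => 'C(p.-1, k)%:R * (kc (tmon t i) * z i ^+ p) ^+ k)); last first.
    move=> k _; rewrite -big_mkcond /= (big_pred1 (kmul k i)); last by move=> m; rewrite eq_sym.
    rewrite exprMn -!kcX -exprM mulrAC -kcM exprMn frob_natK -mulrA tau_tmon.
    by rewrite kcM kc_nat kcX mulnC exprM exprMn mulrA.
  rewrite binsum addrC /D /Dp tofracD tofrac1 tofracM tofracXn.
  by [].
have -> : D i ^+ p = D i ^+ (p.-1).+1 by rewrite (prednK p_gt0).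
rewrite fdiv; last exact: D_neq0.
by rewrite uz0.
Qed.

Lemma eval_ratE (g : {mpoly K[N]}) : eval_rat g phi = mmap cf phi g.
Proof. by []. Qed.

Lemma EV_var i : mmap cf phi (nu_var K i) = Phi i.
Proof. by rewrite /nu_var mmapX mmap1U /phi enum_rankK. Qed.

Lemma EV_C c : mmap cf phi c%:MP = kc c.
Proof. by rewrite mmapC. Qed.

Lemma claimA : eval_rat (@nu_eq K p r t) phi = 0.
Proof.
rewrite eval_ratE /nu_eq rmorphB !rmorph_sum /=.
rewrite [X in X - _](eq_bigr (fun i => Phi i)); last by move=> i _; rewrite EV_var.
rewrite [X in _ - X](eq_bigr (fun i => Phi i ^+ p * kc (tmon t i))); last first.
  by move=> i _; rewrite rmorphM rmorphXn /= EV_var EV_C.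
rewrite (big_pred1 z0); last by move=> i; rewrite /= is_zero_idxE.
rewrite /Phi [X in _ - X](eq_bigr (fun m => \sum_(i | i != z0) u i m ^+ p * kc (tmon t m))); last first.
  by move=> m _; rewrite frobS mulr_suml.
rewrite exchange_big /= -sumrB big1 // => i iz.
by rewrite curve // subrr.
Qed.

Lemma seq_min (T : eqType) (s : seq T) (f : T -> nat) : s != [::] ->
  exists2 x, x \in s & forall y, y \in s -> (f x <= f y)%N.
Proof.
elim: s => // a s IH _; case: s IH => [_|b s IH].
  by exists a; rewrite ?mem_seq1 // => y; rewrite mem_seq1 => /eqP ->.
have [x xs xm] := IH isT.
case: (leqP (f a) (f x)) => [ax|xa].
  exists a; first by rewrite mem_head.
  move=> y; rewrite in_cons => /orP[/eqP -> //|/xm]; exact: leq_trans.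
exists x; first by rewrite in_cons xs orbT.
move=> y; rewrite in_cons => /orP[/eqP ->|/xm //]; exact: ltnW.
Qed.

Lemma divmod_uniq x y x' y' : (y < p)%N -> (y' < p)%N ->
  (p * x + y = p * x' + y')%N -> x = x' /\ y = y'.
Proof.
move=> yp yp' E; split.
  have := congr1 (divn^~ p) E; rewrite /= !(mulnC p) !divnMDl ?p_gt0 //.
  by rewrite !divn_small // !addn0.
have := congr1 (modn^~ p) E; rewrite /= !(mulnC p) !modnMDl.
by rewrite !modn_small.
Qed.

Lemma yi_eq x y : (yi x == yi y) = (x == y).
Proof. by rewrite -val_eqE /= val_eqE (inj_eq enum_rank_inj). Qed.

Definition cL (m : I) : K := if m == z0 then - tmon t jj else cP.
Definition ML (m : I) : 'X_{1..N.+1} :=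
  if m == z0 then (U_(yi jj) *+ p)%MM else U_(yi m)%MM.

Lemma LamE m : Lam m = cL m *: 'X_[ML m].
Proof.
rewrite /Lam /cL /ML; case: ifP => _; rewrite -mul_mpolyC /Yv ?mpolyXn //.
by rewrite mpolyCN.
Qed.

Lemma prodXZ (T : Type) (s : seq T) (c : T -> K) (M : T -> 'X_{1..N.+1}) (e : T -> nat) :
  \prod_(i <- s) (c i *: 'X_[M i]) ^+ e i =
  (\prod_(i <- s) c i ^+ e i) *: 'X_[(\sum_(i <- s) M i *+ e i)%MM].
Proof.
elim: s => [|a s IH]; first by rewrite !big_nil mpolyX0 scale1r.
rewrite !big_cons IH exprZn mpolyXn -scalerAl -scalerAr scalerA mpolyXD.
by [].
Qed.

Definition beta (a : 'X_{1..N}) : 'X_{1..N.+1} :=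
  (\sum_(k <- index_enum 'I_N) ML (enum_val k) *+ a k)%MM.

Lemma beta_val a l : l != z0 ->
  beta a (yi l) = ((l == jj) * (p * a (enum_rank z0)) + a (enum_rank l))%N.
Proof.
move=> lz; rewrite /beta mnm_sumE.
rewrite (eq_bigr (fun k => ML (enum_val k) (yi l) * a k)%N); last first.
  by move=> k _; rewrite mulmnE.
rewrite (reindex (@enum_rank I)) /=; last by apply: onW_bij; exact: enum_rank_bij.
rewrite (bigD1 z0) //= enum_rankK /ML eqxx mulmnE mnm1E yi_eq.
rewrite (bigD1 l) //= enum_rankK (negbTE lz) mnm1E eqxx mul1n.
rewrite big1 ?addn0; last first.
  move=> m /andP[mz ml]; rewrite enum_rankK (negbTE mz) mnm1E yi_eq.
  by rewrite (negbTE ml).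
by rewrite mulnA eq_sym.
Qed.

Lemma beta_inj (a a' : 'X_{1..N}) : (a (enum_rank jj) < p)%N -> (a' (enum_rank jj) < p)%N ->
  beta a = beta a' -> a = a'.
Proof.
move=> ha ha' E; have El l := congr1 (fun b : 'X_{1..N.+1} => b (yi l)) E.
have := El jj; rewrite /= !beta_val ?jj_nz // eqxx !mul1n => /divmod_uniq.
case/(_ ha ha') => e0 ej.
apply/mnmP => k; rewrite -(enum_valK k); set m := enum_val k.
case: (eqVneq m z0) => [->|mz]; first by [].
case: (eqVneq m jj) => [->|mj]; first by [].
by have := El m; rewrite /= !beta_val // (negbTE mj) !mul0n !add0n.
Qed.

Definition wt (a : 'X_{1..N}) : nat :=
  (0 + \sum_(k <- index_enum 'I_N) (Wt (enum_val k) * a k))%N.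

Definition lam (h : {mpoly K[N]}) (a : 'X_{1..N}) : P :=
  (h@_a)%:MP * \prod_(k <- index_enum 'I_N) Lam (enum_val k) ^+ a k.

Lemma Good_term (h : {mpoly K[N]}) a :
  Good (wt a) (kc h@_a * \prod_(k <- index_enum 'I_N) phi k ^+ a k) (lam h a).
Proof.
apply: Good_mul (Good_C _) _.
apply: (@Good_prod _ _ (fun k => Wt (enum_val k) * a k)%N).
move=> k; exact: Good_exp (Good_Phi (enum_val k)).
Qed.

Lemma cL_neq0 m : tmon t jj != 0 -> cL m != 0.
Proof.
move=> tj; rewrite /cL; case: ifP => _; first by rewrite oppr_eq0.
rewrite /cP -subn1 natrB ?p_gt0 //.
by rewrite (pcharf0 chK) sub0r oppr_eq0 oner_eq0.
Qed.

Lemma lamE h a : lam h a =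
  (h@_a * \prod_(k <- index_enum 'I_N) cL (enum_val k) ^+ a k) *: 'X_[beta a].
Proof.
rewrite /lam (eq_bigr (fun k => (cL (enum_val k) *: 'X_[ML (enum_val k)]) ^+ a k)); last first.
  by move=> k _; rewrite LamE.
by rewrite prodXZ mul_mpolyC scalerA.
Qed.

Lemma core (h : {mpoly K[N]}) : tmon t jj != 0 ->
  (forall a, a \in msupp h -> (a (enum_rank jj) < p)%N) -> eval_rat h phi = 0 -> h = 0.
Proof.
move=> tj hb E; apply/eqP; apply/negPn/negP => hn.
have E2 : \sum_(a <- msupp h) kc h@_a * \prod_(k <- index_enum 'I_N) phi k ^+ a k = 0.
  exact: E.
have hs : msupp h != [::] by rewrite msupp_eq0.
have [a0 a0s a0m] := @seq_min _ (msupp h) wt hs.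
pose mu := wt a0.
have G : Good mu 0 (\sum_(a <- msupp h) if wt a == mu then lam h a else 0).
  rewrite -E2 big_seq_cond [X in Good _ _ X]big_seq_cond.
  apply: Good_sum => a /andP[ah _].
  case: eqP => [<-|ne]; first exact: Good_term.
  apply: Good_lower (Good_term h a).
  by rewrite ltn_neqAle a0m // andbT; apply/eqP => e; apply: ne.
have := Good_zero G => /(congr1 (mcoeff (beta a0))).
rewrite mcoeff0 raddf_sum /= (bigD1_seq a0) ?msupp_uniq //= eqxx lamE mcoeffZ mcoeffX eqxx mulr1.
rewrite [X in _ + X]big_seq_cond [X in _ + X]big1 ?addr0; last first.
  move=> a /andP[ah aa0]; case: ifP => _; last by rewrite mcoeff0.
  rewrite lamE mcoeffZ mcoeffX.
  case: eqP => [/beta_inj|_]; last by rewrite mulr0.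
  by move=> /(_ (hb a ah) (hb a0 a0s)) ea; rewrite ea eqxx in aa0.
apply/eqP; rewrite mulf_neq0 //; first by rewrite -mcoeff_msupp.
rewrite prodf_seq_neq0; apply/allP => k _ /=; exact: expf_neq0 (cL_neq0 _ tj).
Qed.

Local Notation fN := (@nu_eq K p r t).
Definition xj : 'I_N := enum_rank jj.

Definition dec (g : {mpoly K[N]}) := exists q h,
  g = q * fN + h /\ forall a, a \in msupp h -> (a xj < p)%N.

Lemma dec0 : dec 0.
Proof.
exists 0, 0; split; first by rewrite mul0r addr0.
by move=> a; rewrite mcoeff_msupp mcoeff0 eqxx.
Qed.

Lemma decD g1 g2 : dec g1 -> dec g2 -> dec (g1 + g2).
Proof.
move=> [q1 [h1 [e1 b1]]] [q2 [h2 [e2 b2]]]; exists (q1 + q2), (h1 + h2); split.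
  by rewrite e1 e2 mulrDl addrACA.
by move=> a /msuppD_le; rewrite mem_cat => /orP[/b1|/b2].
Qed.

Lemma decZ c g : dec g -> dec (c *: g).
Proof.
move=> [q [h [e b]]]; exists (c *: q), (c *: h); split.
  by rewrite e scalerDr scalerAl.
by move=> a /msuppZ_le /b.
Qed.

Lemma decN g : dec g -> dec (- g).
Proof. by move=> H; rewrite -scaleN1r; apply: decZ. Qed.

Lemma decM g g' c q' : dec g -> g' = c *: g + q' * fN -> dec g'.
Proof.
move=> /(decZ c) [q [h [e b]]] ->; exists (q + q'), h; split => //.
by rewrite e mulrDl addrAC.
Qed.

Lemma dec_sum (T : Type) (s : seq T) (Q : pred T) (G : T -> {mpoly K[N]}) :
  (forall i, Q i -> dec (G i)) -> dec (\sum_(i <- s | Q i) G i).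
Proof.
move=> H; elim: s => [|a s IH]; first by rewrite big_nil; exact: dec0.
by rewrite big_cons; case: ifP => // Qa; apply: decD (H _ Qa) IH.
Qed.

Lemma dec_small (a : 'X_{1..N}) : (a xj < p)%N -> dec 'X_[a].
Proof.
move=> ha; exists 0, 'X_[a]; split; first by rewrite mul0r add0r.
by move=> b; rewrite msuppX mem_seq1 => /eqP ->.
Qed.

Lemma xj_neq i : i != jj -> (enum_rank i == xj) = false.
Proof. by move=> ij; rewrite /xj (inj_eq enum_rank_inj) (negbTE ij). Qed.

Lemma z0_neq_jj : (z0 == jj) = false.
Proof. by rewrite eq_sym (negbTE jj_nz). Qed.

Lemma dec_rest (b : 'X_{1..N}) :
  (forall c : 'X_{1..N}, c xj = b xj -> dec 'X_[c]) ->
  dec ('X_[b] * (fN + (tmon t jj)%:MP * 'X_xj ^+ p)).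
Proof.
move=> H.
have -> : fN + (tmon t jj)%:MP * 'X_xj ^+ p =
    \sum_(i | is_zero_idx i) nu_var K i - \sum_(i | i != jj) nu_var K i ^+ p * (tmon t i)%:MP.
  rewrite /nu_eq [X in _ - X + _](bigD1 jj) //= opprD addrAC -addrA.
  by rewrite /nu_var /xj mulrC [X in _ + X]addrA subrr add0r.
rewrite mulrBr !mulr_sumr; apply: decD; last (apply: decN; apply: dec_sum => i hi).
  apply: dec_sum => i hi.
  rewrite /nu_var -mpolyXD; apply: H; rewrite mnmDE mnm1E.
  by rewrite is_zero_idxE in hi; rewrite (eqP hi) xj_neq ?z0_neq_jj // addn0.
rewrite mulrA mulrC mul_mpolyC; apply: decZ.
rewrite /nu_var mpolyXn -mpolyXD; apply: H.
by rewrite mnmDE mulmnE mnm1E xj_neq // mul0n addn0.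
Qed.

Lemma dec_mono k : tmon t jj != 0 -> forall a : 'X_{1..N}, (a xj <= k)%N -> dec 'X_[a].
Proof.
move=> tj; elim: k => [|k IH] a ak.
  by apply: dec_small; apply: leq_ltn_trans ak p_gt0.
case: (ltnP (a xj) p) => [small|big]; first exact: dec_small.
pose a' := (a - U_(xj) *+ p)%MM.
have le : (U_(xj) *+ p <= a)%MM.
  apply/mnm_lepP => i; rewrite mulmnE mnm1E.
  by case: eqP => [<-|_]; rewrite ?mul1n ?mul0n.
have ha : a = (a' + U_(xj) *+ p)%MM by rewrite submK.
have hx : a' xj = (a xj - p)%N by rewrite mnmBE mulmnE mnm1E eqxx mul1n.
apply: (@decM ('X_[a'] * (fN + (tmon t jj)%:MP * 'X_xj ^+ p)) _ (tmon t jj)^-1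
   (- ((tmon t jj)^-1 *: 'X_[a']))).
  apply: dec_rest => c hc; apply: (IH c); rewrite hc hx.
  by rewrite leq_subLR (leq_trans ak) // -addn1 addnC leq_add2r prime_gt0.
rewrite mulrDr scalerDr mulNr -scalerAl addrAC subrr add0r.
rewrite mulrCA mul_mpolyC scalerA mulVf // scale1r.
by rewrite mpolyXn -mpolyXD -ha.
Qed.

Lemma dec_all (g : {mpoly K[N]}) : tmon t jj != 0 -> dec g.
Proof.
move=> tj; rewrite (mpolyE g); apply: dec_sum => a _; apply: decZ.
exact: (dec_mono tj (leqnn _)).
Qed.

Lemma main_sec : tmon t jj != 0 -> unirational_hypersurface fN.
Proof.
move=> tj; exists N.+1, phi; split; first exact: claimA.
move=> g Eg; have [q [h [gE hb]]] := dec_all g tj.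
have Eh : eval_rat h phi = 0.
  have : h = g - q * fN by rewrite gE addrC addKr.
  have cA := claimA; rewrite eval_ratE in cA; rewrite eval_ratE in Eg.
  move=> ->; rewrite eval_ratE rmorphB rmorphM /= Eg cA mulr0 subr0.
  by [].
have h0 := core tj hb Eh.
by exists 1%N, q; rewrite expr1 gE h0 addr0.
Qed.

Lemma tj_of_basis : @is_p_basis K p r t -> tmon t jj != 0.
Proof.
move=> pb; apply/eqP => tj0; have [c [_ U]] := pb 0.
pose c1 : {ffun I -> K} := [ffun _ => 0].
pose c2 : {ffun I -> K} := [ffun i => if i == jj then 1 else 0].
have z0p : (0 : K) ^+ p = 0 by rewrite -(prednK p_gt0) exprS mul0r.
have e1 : (0 : K) = \sum_i c1 i ^+ p * tmon t i.
  by rewrite big1 // => i _; rewrite ffunE z0p mul0r.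
have e2 : (0 : K) = \sum_i c2 i ^+ p * tmon t i.
  rewrite (bigD1 jj) //= ffunE eqxx expr1n mul1r tj0 add0r big1 // => i /negbTE ij.
  by rewrite ffunE ij z0p mul0r.
have E1 := U _ e1; have E2 := U _ e2.
have : c1 = c2 by rewrite -E1 E2.
move=> /ffunP /(_ jj); rewrite !ffunE eqxx => /eqP.
by rewrite eq_sym oner_eq0.
Qed.

End Main.




Unset Implicit Arguments.
Set Strict Implicit.

Theorem proposition8p4 (K : fieldType) (p r : nat) (t : 'I_r -> K) :
  prime p -> p \in [pchar K] -> (1 <= r)%N -> @is_p_basis K p r t ->
  unirational_hypersurface (@nu_eq K p r t).
Proof.
move=> pP chK r1 pb.
exact: (main_sec chK r1 (tj_of_basis pP pb)).
Qed.
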